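(* Consider the lattice Boltzmann scheme described in the context under acoustic scaling ($\lambda>0$ fixed as $\Delta x\to 0$), with a local initialisation $w\in\mathbb{R}^q$ satisfying $w_1=1$ and, for every $r\in\{2,\dots,q\}$ such that the operator $\mathcal{G}_{1r}$ is nonzero, $w_r=\epsilon_r$. Then for every $n\in\mathbb{N}^*$ the modified equation of the $n$-th starting scheme reduces at order $O(1)$ to $\phi(0,x)=\phi(0,x)+O(\Delta x)$ and at the next order to $$\partial_t\phi(0,x)+\lambda\Big(\mathcal{G}_{11}+\sum_{r=2}^q\mathcal{G}_{1r}\epsilon_r\Big)\phi(0,x)=O(\Delta x),\qquad x\in\mathbb{R}^d,$$ so that the starting schemes are consistent at order $O(\Delta x)$ with the modified equation $\partial_t\phi+\lambda(\mathcal{G}_{11}+\sum_{r=2}^q\mathcal{G}_{1r}\epsilon_r)\phi=O(\Delta x)$ of the bulk finite difference scheme (evaluated at $t=0$). Moreover the initial datum of the conserved moment feeding the bulk and starting schemes equals the point-wise discretisation of the initial datum of the Cauchy problem.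
   Context: Fix $d\ge 1$, $q\ge 1$, velocities $c_1,\dots,c_q\in\mathbb{Z}^d$, invertible $M\in GL_q(\mathbb{R})$, $S=\mathrm{diag}(s_1,\dots,s_q)$ with $s_i\in(0,2]$ for $i\ge 2$, $s_1\in\mathbb{R}$, and $\epsilon\in\mathbb{R}^q$ with $\epsilon_1=1$; $K=I-S(I-\epsilon e_1^T)$. Space step $\Delta x$, lattice velocity $\lambda$, $\Delta t=\Delta x/\lambda$. Shifts $(x_\ell\phi)(x)=\phi(x-\Delta x e_\ell)$, $x^c=x_1^{c_1}\cdots x_d^{c_d}$; $T=M\mathrm{diag}(x^{c_1},\dots,x^{c_q})M^{-1}$, $E=TK$; time shift $(z\phi)(t)=\phi(t+\Delta t)$. The scheme is $m(t+\Delta t,\cdot)=Em(t,\cdot)$ with conserved moment $m_1$, targeting $\partial_t u+V\cdot\nabla u=0$, $u(0,\cdot)=u^\circ$; $m_1^\circ$ is the point-wise lattice discretisation of $u^\circ$. $\mathcal{G}=M\mathrm{diag}(c_1\cdot\nabla,\dots,c_q\cdot\nabla)M^{-1}$. Initialisation $m(0,x)=w m_1^\circ(x)$. The $n$-th starting scheme is $m_1(n\Delta t,x)=(E^nw)_1m_1^\circ(x)$; its modified equation is obtained by substituting a smooth $\phi$ into $(z^n\phi)(0,x)=((E^nw)_1\phi(0,\cdot))(x)$, Taylor-expanding in $\Delta x$ and dividing the first-order terms by $n\Delta x/\lambda$. The bulk finite difference scheme is $z^{Q+1-q}\det(zI-E)m_1=0$, where $Q$ is the number of $i\in\{2,\dots,q\}$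 with $s_i\neq1$; its modified equation at leading order is $\partial_t\phi+\lambda(\mathcal{G}_{11}+\sum_{r\ge2}\mathcal{G}_{1r}\epsilon_r)\phi=O(\Delta x)$. *)

(* Defs.v *)
From HB Require Import structures.
From mathcomp Require Import all_boot all_order all_algebra.
From mathcomp Require Import all_classical all_reals all_analysis.
Set Implicit Arguments. Unset Strict Implicit. Unset Printing Implicit Defensive.
Import Order.TTheory GRing.Theory Num.Theory.
Import numFieldNormedType.Exports.
Local Open Scope ring_scope.

Section LBM.
Variable R : realType.

Definition evec (n : nat) (i : 'I_n) : 'rV[R]_n := delta_mx 0 i.

Fixpoint iter_partial (n : nat) (idx : seq 'I_n) (f : 'rV[R]_n -> R) : 'rV[R]_n -> R :=
  match idx with
  | [::] => f
  | i :: idx' => fun z => derive (iter_partial idx' f) z (evec i)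
  end.

Definition smooth (n : nat) (f : 'rV[R]_n -> R) : Prop :=
  (forall (idx : seq 'I_n) (i : 'I_n) (z : 'rV[R]_n),
      derivable (iter_partial idx f) z (evec i)) /\
  (forall idx : seq 'I_n, continuous (iter_partial idx f)).

Definition smooth_tx (d : nat) (phi : R -> 'rV[R]_d -> R) : Prop :=
  smooth (fun z : 'rV[R]_(1 + d) => phi (lsubmx z 0 0) (rsubmx z)).

(* q.+1 velocities indexed by 'I_q.+1 (index ord0 is the paper's index 1,
   i.e. the conserved moment), space dimension d. *)

Definition cvec (d q : nat) (c : 'I_q.+1 -> 'I_d -> int) (k : 'I_q.+1) : 'rV[R]_d :=
  \row_l (c k l)%:~R.

Definition Kmat (q : nat) (s eps : 'I_q.+1 -> R) : 'M[R]_q.+1 :=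
  1%:M - diag_mx (\row_i s i) *m (1%:M - (\col_i eps i) *m delta_mx 0 ord0).

(* One time step m |-> E m with E = T K, T = M diag(x^{c_1},...,x^{c_q}) M^{-1},
   (x^{c} g)(y) = g(y - dx c). *)
Definition stepE (d q : nat) (c : 'I_q.+1 -> 'I_d -> int) (M : 'M[R]_q.+1)
    (s eps : 'I_q.+1 -> R) (dx : R)
    (m : 'I_q.+1 -> 'rV[R]_d -> R) : 'I_q.+1 -> 'rV[R]_d -> R :=
  fun i y =>
    \sum_(k < q.+1) \sum_(j < q.+1)
       M i k * invmx M k j *
       (\sum_(j' < q.+1) Kmat s eps j j' * m j' (y - dx *: cvec c k)).

Definition init (d q : nat) (w : 'I_q.+1 -> R) (m1o : 'rV[R]_d -> R) :
    'I_q.+1 -> 'rV[R]_d -> R :=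
  fun j y => w j * m1o y.

Definition start_op (d q : nat) (c : 'I_q.+1 -> 'I_d -> int) (M : 'M[R]_q.+1)
    (s eps : 'I_q.+1 -> R) (dx : R) (n : nat) (w : 'I_q.+1 -> R)
    (phi0 : 'rV[R]_d -> R) : 'rV[R]_d -> R :=
  iter n (stepE c M s eps dx) (init w phi0) ord0.

(* G = M diag(c_1.grad, ..., c_q.grad) M^{-1}: the entry G_ij is the first-order
   operator a_ij . grad with coefficient vector a_ij = sum_k M_ik (M^-1)_kj c_k *)
Definition Gcoef (d q : nat) (c : 'I_q.+1 -> 'I_d -> int) (M : 'M[R]_q.+1)
    (i j : 'I_q.+1) : 'rV[R]_d :=
  \sum_(k < q.+1) (M i k * invmx M k j) *: cvec c k.

Definition Gop (d q : nat) (c : 'I_q.+1 -> 'I_d -> int) (M : 'M[R]_q.+1)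
    (i j : 'I_q.+1) (f : 'rV[R]_d -> R) (x : 'rV[R]_d) : R :=
  derive f x (Gcoef c M i j).

Definition lattice_discr (d : nat) (u0 : 'rV[R]_d -> R) (dx : R) (k : 'I_d -> int) : R :=
  u0 (dx *: \row_l (k l)%:~R).

End LBM.

(* Main.v *)
Require Import Defs.
From HB Require Import structures.
From mathcomp Require Import all_boot all_order all_algebra.
From mathcomp Require Import all_classical all_reals all_analysis.
From mathcomp Require Import ring lra.
Import Order.TTheory GRing.Theory Num.Theory.
Import numFieldNormedType.Exports.
Set Implicit Arguments. Unset Strict Implicit.
Local Open Scope ring_scope.
Local Open Scope classical_set_scope.
Local Open Scope ring_scope.
Section S.
Variable R : realType.
Lemma near_bound n (I : finType) (f : I -> 'rV[R]_n -> R) (z : 'rV[R]_n) :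
  (forall i, continuous (f i)) ->
  exists2 r : R, 0 < r & forall y : 'rV[R]_n, (forall m, `|y 0 m - z 0 m| < r) ->
     forall i, `|f i y - f i z| < 1.
Proof.
move=> fc.
have : \forall y \near z, forall i, `|f i z - f i y| < 1.
  apply: (@filter_forall _ I (fun i y => `|f i z - f i y| < 1) (nbhs z) _) => i.
  by move: (fc i z) => /cvgrPdist_lt /(_ 1 ltr01).
move=> /nbhs_ballP [r r0 Hr]; exists r => // y Hy i.
rewrite distrC; apply: (Hr y).
split => // a b; rewrite /ball /= (ord1 a).
by rewrite distrC; apply: Hy.
Qed.

Lemma mvt1 (phi dphi : R -> R) :
  (forall t : R, is_derive t (1 : R) phi (dphi t)) ->
  forall a, exists2 th, `|th| <= `|a| & phi a - phi 0 = dphi th * a.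
Proof.
move=> Hd a.
have cont : forall b c : R, {within `[b, c]%classic, continuous phi}.
  move=> b c; apply: derivable_within_continuous => t _.
  by have [] := Hd t.
have [a0|a0] := leP 0 a.
  have [th th_in ->] := MVT_segment a0 (fun t _ => Hd t) (cont 0 a).
  exists th; last by rewrite subr0.
  move: th_in; rewrite in_itv /= => /andP[h1 h2].
  by rewrite !ger0_norm // (le_trans h1 h2).
have a0' : a <= 0 by apply: ltW.
have [th th_in E] := MVT_segment a0' (fun t _ => Hd t) (cont a 0).
exists th.
  move: th_in; rewrite in_itv /= => /andP[h1 h2].
  by rewrite !ler0_norm // lerN2.
by rewrite -[LHS]opprK opprB E sub0r mulrN opprK.
Qed.

Lemma coord_derive n (G : 'rV[R]_n -> R) (y e : 'rV[R]_n) :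
  (forall t : R, derivable G (t *: e + y) e) ->
  forall t : R, is_derive t (1 : R) (fun s => G (s *: e + y)) (derive G (t *: e + y) e).
Proof.
move=> Hd t.
have Eq : (fun h : R => h^-1 *: (((fun s => G (s *: e + y)) \o shift t) (h *: 1) - G (t *: e + y)))
  = (fun h : R => h^-1 *: ((G \o shift (t *: e + y)) (h *: e) - G (t *: e + y))).
  apply/funext => h /=; congr (_ *: (G _ - _)).
  by rewrite [_%:A]mulr1 scalerDl addrA.
split; rewrite /derivable /derive /=; by rewrite Eq //; apply: Hd.
Qed.

Definition ycoord n (z p : 'rV[R]_n) (k : nat) : 'rV[R]_n :=
  \row_m (if (m < k)%N then p 0 m else z 0 m).

Lemma ycoord0 n (z p : 'rV[R]_n) : ycoord z p 0 = z.
Proof. by apply/rowP => m; rewrite !mxE. Qed.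

Lemma ycoordn n (z p : 'rV[R]_n) : ycoord z p n = p.
Proof. by apply/rowP => m; rewrite !mxE ltn_ord. Qed.

Lemma evecE n (l m : 'I_n) : evec R l 0 m = (l == m)%:R.
Proof. by rewrite /evec mxE eqxx eq_sym. Qed.

Lemma ycoordS n (z p : 'rV[R]_n) (l : 'I_n) :
  ycoord z p l.+1 = (p 0 l - z 0 l) *: evec R l + ycoord z p l.
Proof.
apply/rowP => m; rewrite !mxE eqxx /= ltnS leq_eqVlt.
have [->|lm] := eqVneq m l; first by rewrite eqxx ltnn mulr1 subrK.
have -> : (m == l :> nat) = false by apply/negbTE.
by rewrite mulr0 add0r.
Qed.

Lemma tele n (G : 'rV[R]_n -> R) : (forall z l, derivable G z (evec R l)) ->
  forall z p : 'rV[R]_n, exists xi : ('I_n -> 'rV[R]_n),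
    (forall l m, `|xi l 0 m - z 0 m| <= `|p 0 m - z 0 m|) /\
    G p - G z = \sum_(l < n) (p 0 l - z 0 l) * derive G (xi l) (evec R l).
Proof.
move=> Hd z p.
have step : forall l : 'I_n, exists xi : 'rV[R]_n,
   (forall m, `|xi 0 m - z 0 m| <= `|p 0 m - z 0 m|) /\
   G (ycoord z p l.+1) - G (ycoord z p l) = (p 0 l - z 0 l) * derive G xi (evec R l).
  move=> l.
  have Hder := coord_derive (fun t => Hd (t *: evec R l + ycoord z p l) l).
  have [th th_le E] := mvt1 Hder (p 0 l - z 0 l).
  exists (th *: evec R l + ycoord z p l); split; last first.
    by rewrite ycoordS; move: E; rewrite scale0r add0r => ->; rewrite mulrC.
  move=> m; rewrite !mxE eqxx /=.
  have [lm|lm] := eqVneq m l.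
    by rewrite lm ltnn mulr1 addrK.
  rewrite mulr0 add0r; case: ifP => _; first by rewrite lexx.
  by rewrite subrr normr0.
have [xi Hxi] := choice step.
exists xi; split.
  by move=> l m; case: (Hxi l) => H _; apply: H.
rewrite -{1}(ycoordn z p) -{2}(ycoord0 z p).
rewrite -(telescope_sumr (fun k => G (ycoord z p k)) (leq0n n)) big_mkord.
by apply: eq_bigr => l _; case: (Hxi l).
Qed.

Lemma lip n (G : 'rV[R]_n -> R) (z : 'rV[R]_n) (r B : R) :
  (forall (y : 'rV[R]_n) (l : 'I_n), derivable G y (evec R l)) ->
  (forall y : 'rV[R]_n, (forall m, `|y 0 m - z 0 m| < r) -> forall l, `|derive G y (evec R l)| <= B) ->
  forall p : 'rV[R]_n, (forall m, `|p 0 m - z 0 m| < r) ->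
  `|G p - G z| <= B * \sum_(m < n) `|p 0 m - z 0 m|.
Proof.
move=> Hd HB p Hp.
have [xi [Hxi ->]] := tele Hd z p.
rewrite mulr_sumr; apply: le_trans (ler_norm_sum _ _ _) _.
apply: ler_sum => l _; rewrite normrM mulrC ler_wpM2r //.
apply: HB => m; exact: le_lt_trans (Hxi l m) (Hp m).
Qed.

Lemma taylor2 n (F : 'rV[R]_n -> R) : smooth F ->
  forall z v : 'rV[R]_n, exists C delta : R, 0 < delta /\
   forall h : R, `|h| < delta ->
    `|F (z + h *: v) - F z - h * \sum_(l < n) v 0 l * derive F z (evec R l)|
      <= C * (`|h| * `|h|).
Proof.
move=> [Hd Hc] z v.
pose f := fun (i : 'I_n * 'I_n) => iter_partial [:: i.2; i.1] F.
have [r r0 Hr] := @near_bound n _ f z (fun i => Hc [:: i.2; i.1]).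
pose B := \big[Num.max/0]_(i : 'I_n * 'I_n) (`|f i z| + 1).
have HB : forall y : 'rV[R]_n, (forall m, `|y 0 m - z 0 m| < r) -> forall i, `|f i y| <= B.
  move=> y Hy i.
  apply: le_trans (le_bigmax (0:R) (fun i => `|f i z| + 1) i).
  have := Hr y Hy i; rewrite /f => H.
  have := ler_normD (iter_partial [:: i.2; i.1] F y - iter_partial [:: i.2; i.1] F z) (iter_partial [:: i.2; i.1] F z).
  rewrite subrK => H2; apply: le_trans H2 _; rewrite addrC lerD2l; exact: ltW.
pose S := \sum_(m < n) `|v 0 m|.
have S0 : 0 <= S by apply: sumr_ge0 => m _.
exists (B * (S * S)), (r / (S + 1)); split.
  by apply: divr_gt0 => //; apply: ltr_wpDl.
move=> h hlt.
have hS : `|h| * S < r.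
  apply: le_lt_trans (_ : `|h| * (S + 1) < r).
    by rewrite ler_wpM2l // lerDl.
  by rewrite -ltr_pdivlMr // ltr_wpDl.
have Hp : forall m, `|(z + h *: v) 0 m - z 0 m| <= `|h| * `|v 0 m|.
  by move=> m; rewrite !mxE addrAC subrr add0r normrM.
have Hp' : forall m, `|(z + h *: v) 0 m - z 0 m| < r.
  move=> m; apply: le_lt_trans (Hp m) _; apply: le_lt_trans hS.
  rewrite ler_wpM2l //.
  rewrite /S (bigD1 m) //= lerDl; exact: sumr_ge0.
have [xi [Hxi E]] := tele (fun y l => Hd [::] l y) z (z + h *: v).
rewrite E /= mulr_sumr -sumrB.
apply: le_trans (ler_norm_sum _ _ _) _.
have -> : B * (S * S) * (`|h| * `|h|) = \sum_(l < n) (`|h| * `|v 0 l|) * (B * (`|h| * S)).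
  by rewrite -mulr_suml -mulr_sumr; rewrite /S; set SS := \sum_(_ < _) _; rewrite -/SS; ring.
apply: ler_sum => l _.
have -> : (z + h *: v) 0 l - z 0 l = h * v 0 l by rewrite !mxE addrAC subrr add0r.
rewrite mulrA -mulrBr normrM normrM ler_wpM2l //.
have Hxi' : forall m, `|xi l 0 m - z 0 m| < r.
  move=> m; exact: le_lt_trans (Hxi l m) (Hp' m).
have := @lip n (iter_partial [:: l] F) z r B (fun y m => Hd [:: l] m y) _ (xi l) Hxi'.
move=> H; apply: le_trans (H _) _.
  by move=> y Hy m; apply: (HB y Hy (l, m)).
rewrite ler_wpM2l //.
  have Bz : `|f (l, l) z| <= B by apply: HB => m; rewrite subrr normr0.
  exact: le_trans (normr_ge0 _) Bz.
rewrite /S mulr_sumr; apply: ler_sum => m _.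
by apply: le_trans (Hxi l m) _; apply: Hp.
Qed.

Lemma deriveE_sum n (F : 'rV[R]_n -> R) : smooth F ->
  forall z v : 'rV[R]_n, derive F z v = \sum_(l < n) v 0 l * derive F z (evec R l).
Proof.
move=> sF z v.
have [C [d [d0 H]]] := taylor2 sF z v.
set D := \sum_(l < n) _.
apply: cvg_lim => //.
apply/cvgrPdist_le => e e0.
have r0 : 0 < Num.min d (e / (`|C| + 1)).
  by rewrite lt_min d0 /= divr_gt0 // ltr_wpDl.
near=> h.
have hlt : `|h| < Num.min d (e / (`|C| + 1)) by near: h; exact: dnbhs0_lt.
have hne : h != 0 by near: h; exact: nbhs_dnbhs_neq.
move: hlt; rewrite lt_min => /andP[hd he].
have := H h hd.
move=> Hb; rewrite /= /shift (addrC (h *: v) z).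
have sc : forall a b : R, a *: b = a * b by [].
have -> : D - h^-1 *: (F (z + h *: v) - F z) = - h^-1 * (F (z + h *: v) - F z - h * D).
  by rewrite sc; field.
rewrite normrM normrN normrV ?unitfE ?normr_eq0 //.
rewrite ler_pdivrMl ?normr_gt0 //.
apply: le_trans Hb _.
rewrite mulrA [`|h| * e]mulrC ler_wpM2r //.
apply: le_trans (_ : (`|C| + 1) * `|h| <= _).
  by rewrite ler_wpM2r // (le_trans (ler_norm C)) // lerDl.
by rewrite mulrC -ler_pdivlMr ?ltr_wpDl // ltW.
Unshelve. all: by end_near.
Qed.

Lemma derive_eq_fun (V1 V2 : normedModType R) (f1 : V1 -> R) (f2 : V2 -> R)
  (a1 v1 : V1) (a2 v2 : V2) :
  (forall h : R, f1 (h *: v1 + a1) = f2 (h *: v2 + a2)) -> f1 a1 = f2 a2 ->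
  derive f1 a1 v1 = derive f2 a2 v2.
Proof.
move=> H1 H2; rewrite /derive.
have -> : (fun h : R => h^-1 *: ((f1 \o shift a1) (h *: v1) - f1 a1)) =
  (fun h : R => h^-1 *: ((f2 \o shift a2) (h *: v2) - f2 a2)).
  by apply/funext => h /=; rewrite /shift H1 H2.
by [].
Qed.

Section Phi.
Variables (d : nat) (phi : R -> 'rV[R]_d -> R).
Definition Phi (z : 'rV[R]_(1 + d)) : R := phi (lsubmx z 0 0) (rsubmx z).
Definition emb (t : R) (y : 'rV[R]_d) : 'rV[R]_(1 + d) := row_mx (const_mx t) y.

Lemma PhiE t y : Phi (emb t y) = phi t y.
Proof. by rewrite /Phi /emb row_mxKl row_mxKr mxE. Qed.

Lemma emb_lin k t1 a t2 b : k *: emb t1 a + emb t2 b = emb (k * t1 + t2) (k *: a + b).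
Proof.
rewrite /emb scale_row_mx add_row_mx; congr row_mx.
by apply/matrixP => i j; rewrite !mxE.
Qed.

Definition Df (z u : 'rV[R]_(1 + d)) : R := \sum_(l < 1 + d) u 0 l * derive Phi z (evec R l).

Lemma Df_lin z k u v : Df z (k *: u + v) = k * Df z u + Df z v.
Proof.
rewrite /Df mulr_sumr -big_split /=; apply: eq_bigr => l _.
by rewrite !mxE mulrDl mulrA.
Qed.

Hypothesis sphi : smooth_tx phi.

Lemma Dsum z u : derive Phi z u = Df z u.
Proof. exact: (deriveE_sum sphi). Qed.

Lemma Dg_Df x a : derive (phi 0) x a = Df (emb 0 x) (emb 0 a).
Proof.
rewrite -Dsum; apply: (@derive_eq_fun _ _ (phi 0) Phi); last by rewrite PhiE.
by move=> h; rewrite emb_lin PhiE mulr0 addr0.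
Qed.

Lemma Dg_lin x k a b :
  derive (phi 0) x (k *: a + b) = k * derive (phi 0) x a + derive (phi 0) x b.
Proof. by rewrite !Dg_Df -Df_lin emb_lin mulr0 addr0. Qed.

Lemma Dg0 x : derive (phi 0) x 0 = 0.
Proof.
rewrite Dg_Df /Df big1 // => l _.
have -> : emb 0 0 = 0 by rewrite /emb -row_mx0; congr row_mx; apply/matrixP => i j; rewrite !mxE.
by rewrite mxE mul0r.
Qed.

Lemma DgN x a : derive (phi 0) x (- a) = - derive (phi 0) x a.
Proof.
have -> : - a = (-1) *: a + 0 by rewrite addr0 scaleN1r.
by rewrite Dg_lin Dg0 addr0 mulN1r.
Qed.

Lemma Dt x : derive1 (fun t => phi t x) 0 = Df (emb 0 x) (emb 1 0).
Proof.
rewrite -Dsum derive1E; apply: (@derive_eq_fun _ _ (fun t => phi t x) Phi); last by rewrite PhiE.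
by move=> h; rewrite emb_lin PhiE scaler0 add0r mulr1 addr0 [h *: 1]mulr1 addr0.
Qed.

Lemma g_expand x a : exists C delta : R, 0 < delta /\ forall h : R, `|h| < delta ->
  `|phi 0 (x - h *: a) - phi 0 x + h * derive (phi 0) x a| <= C * (`|h| * `|h|).
Proof.
have [C [del [d0 H]]] := @taylor2 _ Phi sphi (emb 0 x) (emb 0 (- a)).
exists C, del; split => // h hd.
have := H h hd.
rewrite (addrC (emb 0 x)) emb_lin PhiE mulr0 addr0 PhiE scalerN addrC.
rewrite -/(Df (emb 0 x) (emb 0 (- a))) -Dg_Df DgN mulrN opprK.
by rewrite addrC (addrC (- (h *: a)) x).
Qed.

Lemma t_expand x : exists C delta : R, 0 < delta /\ forall h : R, `|h| < delta ->
  `|phi h x - phi 0 x - h * derive1 (fun t => phi t x) 0| <= C * (`|h| * `|h|).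
Proof.
have [C [del [d0 H]]] := @taylor2 _ Phi sphi (emb 0 x) (emb 1 0).
exists C, del; split => // h hd.
have := H h hd.
rewrite (addrC (emb 0 x)) emb_lin PhiE mulr1 addr0 scaler0 add0r PhiE.
by rewrite -/(Df (emb 0 x) (emb 1 0)) -Dt.
Qed.
End Phi.
End S.
Section Alg.
Variable R : realType.
Variables (d q : nat) (c : 'I_q.+1 -> 'I_d -> int) (M : 'M[R]_q.+1) (s eps : 'I_q.+1 -> R).

Definition Kv (a : 'I_q.+1 -> R) (i : 'I_q.+1) : R :=
  \sum_(j < q.+1) Kmat s eps i j * a j.

Definition newa (a : 'I_q.+1 -> R) (k : 'I_q.+1) : 'I_q.+1 -> R :=
  fun i => \sum_(j < q.+1) M i k * invmx M k j * Kv a j.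

Definition stepL (L : seq (('I_q.+1 -> R) * 'rV[R]_d)) : seq (('I_q.+1 -> R) * 'rV[R]_d) :=
  [seq (newa p.1 k, p.2 + cvec R c k) | p <- L, k <- index_enum 'I_q.+1].

Definition rep (L : seq (('I_q.+1 -> R) * 'rV[R]_d)) (g : 'rV[R]_d -> R) (h : R)
  (y : 'rV[R]_d) (i : 'I_q.+1) : R :=
  \sum_(p <- L) p.1 i * g (y - h *: p.2).

Lemma step_rep L g h :
  stepE c M s eps h (fun i y => rep L g h y i) = fun i y => rep (stepL L) g h y i.
Proof.
apply/funext => i; apply/funext => y.
rewrite /stepE /rep /stepL big_allpairs_dep /=.
rewrite [RHS]exchange_big /=; apply: eq_bigr => k _.
have eG : forall v : 'rV[R]_d, y - h *: cvec R c k - h *: v = y - h *: (v + cvec R c k).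
  by move=> v; rewrite scalerDr opprD addrA addrAC.
under eq_bigr => j _ do under eq_bigr => j' _ do rewrite mulr_sumr.
under eq_bigr => j _ do rewrite exchange_big mulr_sumr.
rewrite exchange_big; apply: eq_bigr => p _.
rewrite /newa /Kv mulr_suml; apply: eq_bigr => j _.
rewrite -[RHS]mulrA; congr (_ * _); rewrite big_distrl /=; apply: eq_bigr => j0 _.
by rewrite eG mulrA.
Qed.


Definition A (L : seq (('I_q.+1 -> R) * 'rV[R]_d)) (i : 'I_q.+1) : R := \sum_(p <- L) p.1 i.
Definition B (L : seq (('I_q.+1 -> R) * 'rV[R]_d)) : 'rV[R]_d := \sum_(p <- L) p.1 ord0 *: p.2.

Lemma MinvE (HM : M \in unitmx) i j : \sum_(k < q.+1) M i k * invmx M k j = (i == j)%:R.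
Proof. by have := mulmxV HM; move/matrixP/(_ i j); rewrite !mxE. Qed.

Lemma sum_delta (a : 'I_q.+1 -> R) i : \sum_(j < q.+1) (i == j)%:R * a j = a i.
Proof.
rewrite (bigD1 i) //= eqxx mul1r big1 ?addr0 // => j ji.
by rewrite eq_sym (negbTE ji) mul0r.
Qed.

Lemma sum_newa (HM : M \in unitmx) a i : \sum_(k < q.+1) newa a k i = Kv a i.
Proof.
rewrite /newa exchange_big /=.
under eq_bigr => j _ do rewrite -mulr_suml MinvE //.
by rewrite sum_delta.
Qed.

Lemma KmatE i j : Kmat s eps i j = (i == j)%:R - s i * ((i == j)%:R - eps i * (j == ord0)%:R).
Proof.
rewrite /Kmat mxE mul_diag_mx !mxE big_ord1 !mxE /=.
by rewrite eq_sym.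
Qed.

Lemma KvE a i : Kv a i = a i - s i * (a i - eps i * a ord0).
Proof.
rewrite /Kv.
under eq_bigr => j _ do rewrite KmatE.
have -> : \sum_(j < q.+1) ((i == j)%:R - s i * ((i == j)%:R - eps i * (j == ord0)%:R)) * a j
  = \sum_(j < q.+1) (i == j)%:R * a j - s i * (\sum_(j < q.+1) (i == j)%:R * a j
      - eps i * \sum_(j < q.+1) (ord0 == j)%:R * a j).
  rewrite mulr_sumr -sumrB mulr_sumr -sumrB; apply: eq_bigr => j _.
  by rewrite [(ord0 == j)]eq_sym; ring.
by rewrite !sum_delta.
Qed.

Lemma Kv0 (e0 : eps ord0 = 1) a : Kv a ord0 = a ord0.
Proof. by rewrite KvE e0 mul1r subrr mulr0 subr0. Qed.

Lemma A_step (HM : M \in unitmx) L i : A (stepL L) i = Kv (A L) i.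
Proof.
rewrite /A /stepL big_allpairs_dep /=.
under eq_bigr => p _ do rewrite sum_newa //.
rewrite /Kv exchange_big /=; apply: eq_bigr => j _.
by rewrite mulr_sumr.
Qed.

Lemma B_step (HM : M \in unitmx) (e0 : eps ord0 = 1) L :
  B (stepL L) = B L + \sum_(j < q.+1) A (stepL L) j *: Gcoef c M ord0 j.
Proof.
rewrite /B big_allpairs_dep /=.
under eq_bigr => p _ do under eq_bigr => k _ do rewrite scalerDr.
under eq_bigr => p _ do rewrite big_split /= -scaler_suml sum_newa // Kv0 //.
rewrite big_split /=; congr (_ + _).
have AS : forall j, A (stepL L) j = \sum_(p <- L) Kv p.1 j.
  by move=> j; rewrite /A /stepL big_allpairs_dep /=; apply: eq_bigr => p _; rewrite sum_newa.
under [RHS]eq_bigr => j _ do rewrite AS scaler_suml.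
under [RHS]eq_bigr => j _ do under eq_bigr => p _ do rewrite /Gcoef scaler_sumr.
rewrite [RHS]exchange_big /=; apply: eq_bigr => p _.
rewrite [RHS]exchange_big /=; apply: eq_bigr => k _.
rewrite /newa scaler_suml; apply: eq_bigr => j _.
by rewrite scalerA mulrC.
Qed.


Definition L0 (w : 'I_q.+1 -> R) : seq (('I_q.+1 -> R) * 'rV[R]_d) := [:: (w, 0)].

Lemma iter_rep w g h n :
  iter n (stepE c M s eps h) (init w g) = fun i y => rep (iter n stepL (L0 w)) g h y i.
Proof.
elim: n => [|n IH].
  apply/funext => i; apply/funext => y; rewrite /=.
  by rewrite /rep /L0 big_seq1 /= scaler0 subr0.
by rewrite iterS IH step_rep iterS.
Qed.

Definition astar : 'rV[R]_d :=
  Gcoef c M ord0 ord0 + \sum_(r < q.+1 | r != ord0) eps r *: Gcoef c M ord0 r.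

Definition Pinv (a : 'I_q.+1 -> R) : Prop :=
  a ord0 = 1 /\ forall r, r != ord0 -> Gcoef c M ord0 r != 0 -> a r = eps r.

Lemma Pinv_sum a : Pinv a -> \sum_(j < q.+1) a j *: Gcoef c M ord0 j = astar.
Proof.
move=> [a0 ar]; rewrite (bigD1 ord0) //= a0 scale1r /astar; congr (_ + _).
apply: eq_bigr => r r0.
have [->|G0] := eqVneq (Gcoef c M ord0 r) 0; first by rewrite !scaler0.
by rewrite ar.
Qed.

Lemma Pinv_K (e0 : eps ord0 = 1) a : Pinv a -> Pinv (Kv a).
Proof.
move=> [a0 ar]; split; first by rewrite Kv0.
by move=> r r0 G0; rewrite KvE a0 mulr1 ar // subrr mulr0 subr0.
Qed.

Lemma inv_A (HM : M \in unitmx) (e0 : eps ord0 = 1) w : Pinv w ->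
  forall n, Pinv (A (iter n stepL (L0 w))).
Proof.
move=> Pw; elim => [|n IH].
  have -> : A (iter 0 stepL (L0 w)) = w by apply/funext => i; rewrite /A /L0 big_seq1.
  exact: Pw.
have -> : A (iter n.+1 stepL (L0 w)) = Kv (A (iter n stepL (L0 w))).
  by apply/funext => i; rewrite iterS A_step.
exact: Pinv_K.
Qed.

Lemma B_iter (HM : M \in unitmx) (e0 : eps ord0 = 1) w : Pinv w ->
  forall n, B (iter n stepL (L0 w)) = astar *+ n.
Proof.
move=> Pw; elim => [|n IH].
  by rewrite /B /L0 /= big_seq1 scaler0 mulr0n.
rewrite iterS B_step // IH -iterS Pinv_sum.
  by rewrite mulrS addrC.
exact: (inv_A HM e0 Pw n.+1).
Qed.

Lemma A_iter0 (HM : M \in unitmx) (e0 : eps ord0 = 1) w : Pinv w ->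
  forall n, \sum_(p <- iter n stepL (L0 w)) p.1 ord0 = 1.
Proof. by move=> Pw n; have [] := inv_A HM e0 Pw n. Qed.
End Alg.

Section Final.
Variable R : realType.

Lemma list_bound (d : nat) (phi : R -> 'rV[R]_d -> R) (sphi : smooth_tx phi) (x : 'rV[R]_d)
  (T : Type) (L : seq T) (a : T -> R) (v : T -> 'rV[R]_d) :
  exists C delta : R, 0 < delta /\ forall h : R, 0 < h < delta ->
   `|\sum_(p <- L) a p * (phi 0 (x - h *: v p) - phi 0 x + h * derive (phi 0) x (v p))|
     <= C * (h * h).
Proof.
elim: L => [|p L [C2 [d2 [d20 H2]]]].
  exists 0, 1; split => // h _; by rewrite big_nil normr0 mul0r.
have [C1 [d1 [d10 H1]]] := g_expand sphi x (v p).
exists (`|a p| * C1 + C2), (Num.min d1 d2); split; first by rewrite lt_min d10 d20.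
move=> h /andP[h0]; rewrite lt_min => /andP[hd1 hd2].
rewrite big_cons; apply: le_trans (ler_normD _ _) _.
rewrite mulrDl normrM -mulrA; apply: lerD.
  rewrite ler_wpM2l //; have := H1 h; rewrite (gtr0_norm h0) => H; exact: H.
by apply: H2; rewrite h0.
Qed.

Lemma Dg_sumL (d : nat) (phi : R -> 'rV[R]_d -> R) (sphi : smooth_tx phi) (x : 'rV[R]_d)
  (T : Type) (L : seq T) (a : T -> R) (v : T -> 'rV[R]_d) :
  \sum_(p <- L) a p * derive (phi 0) x (v p) = derive (phi 0) x (\sum_(p <- L) a p *: v p).
Proof.
elim: L => [|p L IH]; first by rewrite !big_nil Dg0.
by rewrite !big_cons IH Dg_lin.
Qed.

Lemma Dg_add (d : nat) (phi : R -> 'rV[R]_d -> R) (sphi : smooth_tx phi) (x u v : 'rV[R]_d) :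
  derive (phi 0) x (u + v) = derive (phi 0) x u + derive (phi 0) x v.
Proof. by rewrite -{1}(scale1r u) Dg_lin //; congr (_ + _); exact: mul1r. Qed.

Lemma Dg_natmul (d : nat) (phi : R -> 'rV[R]_d -> R) (sphi : smooth_tx phi) (x u : 'rV[R]_d) n :
  derive (phi 0) x (u *+ n) = derive (phi 0) x u *+ n.
Proof.
elim: n => [|n IH]; first by rewrite !mulr0n Dg0.
by rewrite !mulrS Dg_add // IH.
Qed.

Lemma Dg_astar (d q : nat) (c : 'I_q.+1 -> 'I_d -> int) (M : 'M[R]_q.+1) (eps : 'I_q.+1 -> R)
  (phi : R -> 'rV[R]_d -> R) (sphi : smooth_tx phi) (x : 'rV[R]_d) :
  derive (phi 0) x (astar c M eps) = Gop c M ord0 ord0 (phi 0) x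
        + \sum_(r < q.+1 | r != ord0) Gop c M ord0 r (phi 0) x * eps r.
Proof.
rewrite /astar Dg_add //; congr (_ + _).
rewrite (big_morph (derive (phi 0) x) (Dg_add sphi x) (Dg0 sphi x)).
apply: eq_bigr => r _.
by rewrite -[X in derive _ _ X]addr0 Dg_lin // Dg0 // addr0 mulrC.
Qed.

Lemma sum_rearr (T : Type) (L : seq T) (a G D : T -> R) (gx h : R) :
  \sum_(p <- L) a p * (G p - gx + h * D p) =
  \sum_(p <- L) a p * G p - (\sum_(p <- L) a p) * gx + h * \sum_(p <- L) a p * D p.
Proof.
rewrite mulr_suml mulr_sumr -sumrB -big_split /=; apply: eq_bigr => p _; ring.
Qed.

Lemma field_id (P F gx T DA EE ET h n lam tau : R) :
  n != 0 -> h != 0 -> lam != 0 ->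
  tau = n * (h / lam) -> P = ET + gx + tau * T -> F = gx + EE - h * (n * DA) ->
  (P - F) / tau - (T + lam * DA) = (ET - EE) / tau.
Proof. by move=> n0 h0 l0 -> -> ->; field; rewrite n0 h0 l0. Qed.

End Final.

Unset Implicit Arguments.
Theorem corollary1 (R : realType) (d q : nat) (c : 'I_q.+1 -> 'I_d -> int)
    (M : 'M[R]_q.+1) (s eps w : 'I_q.+1 -> R) (lambda : R) :
  (0 < d)%N ->
  M \in unitmx ->
  (forall i : 'I_q.+1, i != ord0 -> 0 < s i <= 2) ->
  eps ord0 = 1 ->
  0 < lambda ->
  w ord0 = 1 ->
  (forall r : 'I_q.+1, r != ord0 -> Gcoef c M ord0 r != 0 -> w r = eps r) ->
  (forall (n : nat), (0 < n)%N ->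
     forall (phi : R -> 'rV[R]_d -> R), smooth_tx phi ->
     forall x : 'rV[R]_d,
       (* order O(1) *)
       (exists C delta : R, 0 < delta /\
          forall dx : R, 0 < dx < delta ->
            `| start_op c M s eps dx n w (phi 0) x - phi 0 x | <= C * dx)
       /\
       (* next order: modified equation divided by n dt, dt = dx / lambda *)
       (exists C delta : R, 0 < delta /\
          forall dx : R, 0 < dx < delta ->
            `| (phi (n%:R * (dx / lambda)) x - start_op c M s eps dx n w (phi 0) x)
                 / (n%:R * (dx / lambda))
               - (derive1 (fun t => phi t x) 0
                  + lambda * (Gop c M ord0 ord0 (phi 0) x
                     + \sum_(r < q.+1 | r != ord0) Gop c M ord0 r (phi 0) x * eps r)) |
              <= C * dx)) /\
  (* initial conserved moment = point-wise discretisation of the initial datum *)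
  (forall (u0 : 'rV[R]_d -> R) (dx : R) (k : 'I_d -> int),
     init w u0 ord0 (dx *: \row_l (k l)%:~R) = lattice_discr u0 dx k).
Proof.
move=> d0 HM Hs e0 lam0 w0 hw; split; last first.
  by move=> u0 dx k; rewrite /init /lattice_discr w0 mul1r.
move=> n n0 phi sphi x.
have Pw : Pinv c M eps w by split.
pose L := iter n (stepL c M s eps) (L0 d w).
have SO : forall h, start_op c M s eps h n w (phi 0) x = \sum_(p <- L) p.1 ord0 * phi 0 (x - h *: p.2).
  by move=> h; rewrite /start_op iter_rep.
have A1 : \sum_(p <- L) p.1 ord0 = 1 by apply: (A_iter0 s HM e0 Pw n).
have BL : B L = astar c M eps *+ n by apply: (B_iter s HM e0 Pw n).
pose DA := derive (phi 0) x (astar c M eps).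
have DB : \sum_(p <- L) p.1 ord0 * derive (phi 0) x p.2 = n%:R * DA.
  rewrite (Dg_sumL sphi x L (fun p => p.1 ord0) (fun p => p.2)).
  by rewrite -/(B L) BL Dg_natmul // mulr_natl.
have [CE [dE [dE0 HE]]] := list_bound sphi x L (fun p => p.1 ord0) (fun p => p.2).
pose E := fun h : R => \sum_(p <- L) p.1 ord0 * (phi 0 (x - h *: p.2) - phi 0 x + h * derive (phi 0) x p.2).
have keyF : forall h, start_op c M s eps h n w (phi 0) x = phi 0 x + E h - h * (n%:R * DA).
  by move=> h; rewrite SO /E sum_rearr A1 DB; ring.
split.
  exists (`|CE| + n%:R * `|DA|), (Num.min dE 1); split; first by rewrite lt_min dE0 ltr01.
  move=> h /andP[h0]; rewrite lt_min => /andP[hdE h1].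
  have HEh := HE h; rewrite h0 hdE /= in HEh; have {}HEh := HEh isT.
  rewrite keyF; have -> : phi 0 x + E h - h * (n%:R * DA) - phi 0 x = E h - h * (n%:R * DA) by ring.
  apply: le_trans (ler_normB _ _) _.
  rewrite mulrDl; apply: lerD.
    apply: le_trans HEh _; rewrite mulrA.
    apply: le_trans (_ : `|CE| * h * h <= _).
      by rewrite ler_pM2r // ler_pM2r // ler_norm.
    have := normr_ge0 CE; move: (`|CE|) => a a0; have ah := mulr_ge0 a0 (ltW h0); move: (a * h) ah => b b0; nra.
  by rewrite normrM gtr0_norm // normrM normr_nat mulrC.
have [CT [dT [dT0 HT]]] := t_expand sphi x.
have n0' : (0:R) < n%:R by rewrite ltr0n.
exists (`|CT| * (n%:R / lambda) + `|CE| * (lambda / n%:R)), (Num.min dE (dT * lambda / n%:R)); split.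
  by rewrite lt_min dE0 /= divr_gt0 ?mulr_gt0.
move=> h /andP[h0]; rewrite lt_min => /andP[hdE hdT].
pose tau := n%:R * (h / lambda).
have tau0 : 0 < tau by rewrite mulr_gt0 // divr_gt0.
have taudT : tau < dT.
  move: hdT; rewrite ltr_pdivlMr // => H.
  by rewrite /tau mulrA [n%:R * h]mulrC ltr_pdivrMr.
have HTt := HT tau; rewrite (gtr0_norm tau0) in HTt; have {}HTt := HTt taudT.
have HEh := HE h; rewrite h0 hdE /= in HEh; have {}HEh := HEh isT.
rewrite -/tau -Dg_astar // -/DA.
rewrite (@field_id R (phi tau x) (start_op c M s eps h n w (phi 0) x) (phi 0 x)
   (derive1 (fun t => phi t x) 0) DA (E h)
   (phi tau x - phi 0 x - tau * derive1 (fun t => phi t x) 0) h n%:R lambda tau); first last.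
- exact: keyF.
- by ring.
- by [].
- by rewrite gt_eqF.
- by rewrite gt_eqF.
- by rewrite gt_eqF.
rewrite normrM normfV (gtr0_norm tau0) ler_pdivrMr //.
apply: le_trans (ler_normB _ _) _.
apply: le_trans (lerD HTt HEh) _.
have -> : (`|CT| * (n%:R / lambda) + `|CE| * (lambda / n%:R)) * h * tau
    = `|CT| * (tau * tau) + `|CE| * (h * h).
  by rewrite /tau; field; rewrite !gt_eqF.
apply: lerD; rewrite ler_pM2r ?mulr_gt0 ?invr_gt0 //; first [ by rewrite ler_norm | by have := ler_norm CT | by have := ler_norm CE ].
Qed.
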